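(* Let $\mathcal{E}$ be the coarse structure on $\omega$ with base $\{E_H: H\subseteq S_\omega \text{ finite}, \mathrm{id}\in H\}$, $E_H=\{(x,y):y\in Hx\}$, where $S_\omega$ is the group of all permutations of $\omega$. Then $so(\omega,\mathcal{E})=so(\omega,\mathfrak{M}_\omega)$ and $\delta_{(\omega,\mathcal{E})}=\delta_{(\omega,\mathfrak{M}_\omega)}$, although $\mathcal{E}\neq\mathfrak{M}_\omega$; both balleans have exactly the finite sets as bounded sets.
   Context: A ballean $(X,\mathcal{E})$ is a set with a coarse structure. $E[x]=\{y:(x,y)\in E\}$, $E[A]=\bigcup_{a\in A}E[a]$. $Y$ is bounded if $Y\subseteq E[x]$ for some $x$ and $E\in\mathcal{E}$. $A\,\delta_{(X,\mathcal{E})}\,B$ means there is $E\in\mathcal{E}$ with $A\subseteq E[B]$ and $B\subseteq E[A]$. A function $f:X\to\mathbb{R}$ is slowly oscillating if for every $E\in\mathcal{E}$ and $\varepsilon>0$ there is a bounded $B$ with $\operatorname{diam} f(E[x])<\varepsilon$ for all $x\in X\setminus B$; $so(X,\mathcal{E})$ denotes the set of bounded slowly oscillating functions. $\mathfrak{M}_\omega$ is the coarse structure on $\omega$ with base $\{M_{\mathcal{P}}\}$, where $\mathcal{P}$ ranges over coverings of $\omega$ by finite sets such that for each $x\in\omega$ the set $\bigcup\{P'\in\mathcal{P}:x\in P'\}$ is finite, and $M_{\mathcal{P}}=\{(x,y):x,y\in P\text{ for some }P\in\mathcal{P}\}$. *)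

(* Defs.v *)
From Stdlib Require Import Reals List.
Import ListNotations.
Open Scope R_scope.

Definition rel := nat -> nat -> Prop.

Definition coarse := rel -> Prop.

Definition generated_by (base : rel -> Prop) : coarse :=
  fun E => exists B, base B /\ (forall x y, E x y -> B x y).

Definition ball (E : rel) (x : nat) : nat -> Prop := fun y => E x y.

Definition bounded_set (C : coarse) (Y : nat -> Prop) : Prop :=
  exists E x, C E /\ (forall y, Y y -> ball E x y).

Definition finite_set (Y : nat -> Prop) : Prop :=
  exists l : list nat, forall y, Y y -> In y l.

Definition diam_lt (f : nat -> R) (A : nat -> Prop) (eps : R) : Prop :=
  exists d, d < eps /\ (forall y z, A y -> A z -> Rabs (f y - f z) <= d).

Definition bounded_fun (f : nat -> R) : Prop :=
  exists M, forall x, Rabs (f x) <= M.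

Definition slowly_oscillating (C : coarse) (f : nat -> R) : Prop :=
  forall E eps, C E -> 0 < eps ->
    exists B, bounded_set C B /\ (forall x, ~ B x -> diam_lt f (ball E x) eps).

Definition so (C : coarse) (f : nat -> R) : Prop :=
  bounded_fun f /\ slowly_oscillating C f.

Definition ball_set (E : rel) (A : nat -> Prop) : nat -> Prop :=
  fun y => exists a, A a /\ E a y.

Definition subset (A B : nat -> Prop) : Prop := forall x, A x -> B x.

Definition delta (C : coarse) (A B : nat -> Prop) : Prop :=
  exists E, C E /\ subset A (ball_set E B) /\ subset B (ball_set E A).

Definition is_perm (h : nat -> nat) : Prop :=
  (forall x y, h x = h y -> x = y) /\ (forall y, exists x, h x = y).

Definition E_H (H : list (nat -> nat)) : rel :=
  fun x y => exists h, In h H /\ y = h x.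

Definition perm_base (B : rel) : Prop :=
  exists H : list (nat -> nat),
    (forall h, In h H -> is_perm h) /\ In (fun x : nat => x) H /\
    (forall x y, B x y <-> E_H H x y).

Definition calE : coarse := generated_by perm_base.

(* M_P for a covering P of omega by finite sets (given as lists) *)
Definition M_P (P : list nat -> Prop) : rel :=
  fun x y => exists p, P p /\ In x p /\ In y p.

Definition admissible_cover (P : list nat -> Prop) : Prop :=
  (forall x, exists p, P p /\ In x p) /\
  (forall x, finite_set (fun y => exists p, P p /\ In x p /\ In y p)).

Definition M_base (B : rel) : Prop :=
  exists P, admissible_cover P /\ (forall x y, B x y <-> M_P P x y).

Definition M_omega : coarse := generated_by M_base.

(* Main.v *)
Require Import Defs.
From Stdlib Require Import Reals List Lia Lra Classical ClassicalEpsilon PeanoNat FinFun.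
Import ListNotations.
Local Open Scope nat_scope.

Definition swap (u v : nat) : nat -> nat :=
  fun x => if Nat.eqb x u then v else if Nat.eqb x v then u else x.

Lemma swap_invol u v x : swap u v (swap u v x) = x.
Proof.
  unfold swap.
  destruct (Nat.eqb_spec x u); destruct (Nat.eqb_spec x v); subst;
  repeat match goal with |- context[Nat.eqb ?a ?b] => destruct (Nat.eqb_spec a b) end;
  subst; try congruence.
Qed.

Lemma swap_l u v : swap u v u = v.
Proof. unfold swap; rewrite Nat.eqb_refl; auto. Qed.

Lemma swap_r u v : swap u v v = u.
Proof. unfold swap. destruct (Nat.eqb_spec v u); subst; auto. rewrite Nat.eqb_refl; auto. Qed.

Lemma invol_perm s : (forall x, s (s x) = x) -> is_perm s.
Proof.
  intro Hs; split.
  - intros x y H. rewrite <- (Hs x), <- (Hs y), H; reflexivity.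
  - intros y; exists (s y); apply Hs.
Qed.

Lemma id_perm : is_perm (fun x => x).
Proof. apply invol_perm; auto. Qed.

Lemma swap_perm u v : is_perm (swap u v).
Proof. apply invol_perm; apply swap_invol. Qed.

Lemma calE_of_list H : (forall h, In h H -> is_perm h) -> In (fun x => x) H -> calE (E_H H).
Proof.
  intros H1 H2. exists (E_H H); split; auto.
  exists H; split; [auto| split; [auto| tauto]].
Qed.

Lemma M_omega_of P : admissible_cover P -> M_omega (M_P P).
Proof. intros Ha. exists (M_P P); split; auto. exists P; split; auto; tauto. Qed.

Lemma M_P_refl P : admissible_cover P -> forall x, M_P P x x.
Proof. intros [Hc _] x. destruct (Hc x) as [p [Hp Hx]]. exists p; auto. Qed.

Lemma M_P_sym P x y : M_P P x y -> M_P P y x.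
Proof. intros [p [? [? ?]]]; exists p; auto. Qed.

Lemma M_P_fin P : admissible_cover P -> forall x, finite_set (M_P P x).
Proof. intros [_ Hf] x. apply Hf. Qed.

Lemma finite_union P : admissible_cover P -> forall l : list nat,
  finite_set (fun y => exists u, In u l /\ M_P P u y).
Proof.
  intros Ha l; induction l as [|u l IH].
  - exists []; intros y [u [[] _]].
  - destruct IH as [l1 H1]. destruct (M_P_fin P Ha u) as [l2 H2].
    exists (l2 ++ l1); intros y [w [[<-|Hw] Hm]]; apply in_or_app.
    + left; auto.
    + right; apply H1; eauto.
Qed.

Lemma finite_sub (A B : nat -> Prop) : (forall x, A x -> B x) -> finite_set B -> finite_set A.
Proof. intros H [l Hl]; exists l; auto. Qed.

Lemma inf_of_not_finite A : ~ finite_set A -> forall n, exists a, n <= a /\ A a.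
Proof.
  intros Hn n; apply NNPP; intro H; apply Hn; exists (seq 0 n); intros y Hy; apply in_seq.
  split; [lia|]. destruct (Compare_dec.le_lt_dec n y); [exfalso; apply H; exists y; auto | lia].
Qed.

Lemma pigeon (a : nat -> nat) : (forall n m, a n = a m -> n = m) ->
  forall l, exists n, ~ In (a n) l.
Proof.
  intros Ha l. apply NNPP; intro H.
  assert (Hi : incl (map a (seq 0 (S (length l)))) l).
  { intros y Hy. apply in_map_iff in Hy. destruct Hy as [n [<- _]].
    apply NNPP; intro Hn; apply H; exists n; auto. }
  apply NoDup_incl_length in Hi.
  - rewrite length_map, length_seq in Hi; lia.
  - apply Injective_map_NoDup; [intros ? ? ?; auto | apply seq_NoDup].
Qed.

Lemma inf_seq (A : nat -> Prop) : (forall n, exists a, n <= a /\ A a) ->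
  exists e : nat -> nat, (forall k, A (e k)) /\ (forall k m, e k = e m -> k = m).
Proof.
  intros H.
  pose (nxt := fun n => proj1_sig (constructive_indefinite_description _ (H n))).
  assert (Hn : forall n, n <= nxt n /\ A (nxt n)).
  { intro n; unfold nxt; destruct (constructive_indefinite_description _ (H n)); auto. }
  pose (e := fun k => nat_rect (fun _ => nat) (nxt 0) (fun _ p => nxt (S p)) k).
  assert (Hs : forall k, e k < e (S k)).
  { intro k; simpl; destruct (Hn (S (e k))); lia. }
  assert (Hm : forall k m, k < m -> e k < e m).
  { intros k m; induction m; intros; [lia|].
    destruct (Nat.eq_dec k m); [subst; apply Hs|]. specialize (Hs m); specialize (IHm ltac:(lia)); lia. }
  exists e; split.
  - intro k; destruct k; simpl; apply Hn.
  - intros k m Hkm. destruct (Compare_dec.lt_eq_lt_dec k m) as [[h|h]|h]; auto;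
      [specialize (Hm _ _ h) | specialize (Hm _ _ h)]; lia.
Qed.

Lemma invol_exists (D : nat -> Prop) (t : nat -> nat) :
  (forall x y, D x -> D y -> t x = t y -> x = y) -> (forall x, D x -> ~ D (t x)) ->
  exists s, is_perm s /\ forall x, D x -> s (t x) = x.
Proof.
  intros Hinj HD.
  pose (s := fun x => match excluded_middle_informative (D x) with
    | left _ => t x
    | right _ => match excluded_middle_informative (exists y, D y /\ t y = x) with
       | left e => proj1_sig (constructive_indefinite_description _ e)
       | right _ => x end end).
  assert (Ht : forall x, D x -> s (t x) = x).
  { intros x Dx. unfold s. destruct (excluded_middle_informative (D (t x))) as [d|d].
    - exfalso; exact (HD x Dx d).
    - destruct (excluded_middle_informative _) as [e|e].
      + destruct (constructive_indefinite_description _ e) as [y [Dy Ey]]; simpl.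
        apply Hinj; auto.
      + exfalso; apply e; eauto. }
  exists s; split; auto.
  apply invol_perm. intro x.
  destruct (classic (D x)) as [Dx|nDx].
  - assert (E1 : s x = t x) by (unfold s; destruct (excluded_middle_informative (D x)); tauto).
    rewrite E1; auto.
  - destruct (classic (exists y, D y /\ t y = x)) as [[y [Dy <-]]|ne].
    + rewrite Ht; auto. unfold s. destruct (excluded_middle_informative (D y)); tauto.
    + assert (E1 : s x = x).
      { unfold s. destruct (excluded_middle_informative (D x)); [tauto|].
        destruct (excluded_middle_informative _); tauto. }
      rewrite !E1; auto.
Qed.

Lemma preimages x (H : list (nat -> nat)) : (forall h, In h H -> is_perm h) ->
  exists l, forall z h, In h H -> h z = x -> In z l.
Proof.
  induction H as [|h H IH]; intros Hp.
  - exists []; intros z h [].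
  - destruct IH as [l Hl]; [intros; apply Hp; simpl; auto|].
    destruct (Hp h (or_introl eq_refl)) as [Hi Hs]. destruct (Hs x) as [z0 Hz0].
    exists (z0 :: l). intros z g [<-|Hg] Hgz.
    + left; apply Hi; congruence.
    + right; eauto.
Qed.

Lemma E_H_sub_M H : (forall h, In h H -> is_perm h) -> In (fun x => x) H ->
  exists P, admissible_cover P /\ forall x y, E_H H x y -> M_P P x y.
Proof.
  intros Hp Hid.
  exists (fun p => exists z, p = map (fun h => h z) H). split.
  - split.
    + intro x. exists (map (fun h => h x) H); split; [eauto|].
      apply (in_map (fun h => h x) H (fun x => x)); auto.
    + intro x. destruct (preimages x H Hp) as [l Hl].
      exists (flat_map (fun z => map (fun h => h z) H) l).
      intros y [p [[z ->] [Hx Hy]]].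
      apply in_map_iff in Hx. destruct Hx as [h [Hhz Hh]].
      apply in_flat_map. exists z; split; eauto.
  - intros x y [h [Hh ->]]. exists (map (fun h => h x) H). split; [eauto|]. split.
    + apply (in_map (fun h => h x) H (fun x => x)); auto.
    + apply (in_map (fun h => h x) H h); auto.
Qed.

Lemma calE_sub_M E : calE E -> exists P, admissible_cover P /\ forall x y, E x y -> M_P P x y.
Proof.
  intros [B [[H [Hp [Hid Hiff]]] Hsub]].
  destruct (E_H_sub_M H Hp Hid) as [P [Ha HP]].
  exists P; split; auto. intros x y Exy. apply HP, Hiff, Hsub; auto.
Qed.

Lemma calE_bounded_finite Y : bounded_set calE Y -> finite_set Y.
Proof.
  intros [E [x [[B [[H [Hp [Hid Hiff]]] Hsub]] HY]]].
  exists (map (fun h => h x) H). intros y Hy.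
  apply HY, Hsub, Hiff in Hy. destruct Hy as [h [Hh ->]].
  apply (in_map (fun h => h x) H h); auto.
Qed.

Lemma M_bounded_finite Y : bounded_set M_omega Y -> finite_set Y.
Proof.
  intros [E [x [[B [[P [Ha Hiff]] Hsub]] HY]]].
  destruct (M_P_fin P Ha x) as [l Hl]. exists l. intros y Hy.
  apply Hl, Hiff, Hsub, HY; auto.
Qed.

Lemma finite_calE_bounded Y : finite_set Y -> bounded_set calE Y.
Proof.
  intros [l Hl].
  exists (E_H ((fun x => x) :: map (swap 0) l)), 0. split.
  - apply calE_of_list; [|left; auto].
    intros h [<-|Hh]; [apply id_perm|]. apply in_map_iff in Hh.
    destruct Hh as [y [<- _]]; apply swap_perm.
  - intros y Hy. exists (swap 0 y); split.
    + right; apply in_map; auto.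
    + rewrite swap_l; auto.
Qed.

Lemma finite_M_bounded Y : finite_set Y -> bounded_set M_omega Y.
Proof.
  intros Hf. destruct (finite_calE_bounded Y Hf) as [E [x [HE HY]]].
  destruct (calE_sub_M E HE) as [P [Ha HP]].
  exists (M_P P), x; split; [apply M_omega_of; auto|]. intros y Hy; apply HP, HY; auto.
Qed.

Lemma not_equal : ~ (forall E : rel, calE E <-> M_omega E).
Proof.
  intro Heq.
  set (P := fun p => exists n, p = seq n (S n)).
  assert (Ha : admissible_cover P).
  { split.
    - intro x; exists (seq x (S x)); split; [exists x; auto| apply in_seq; lia].
    - intro x; exists (seq 0 (S (2 * x))). intros y [p [[n ->] [Hx Hy]]].
      apply in_seq in Hx; apply in_seq in Hy; apply in_seq; lia. }
  pose proof (proj2 (Heq _) (M_omega_of P Ha)) as HE.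
  destruct HE as [B [[H [Hp [Hid Hiff]]] Hsub]].
  set (n := length H).
  assert (Hi : incl (seq n (S n)) (map (fun h => h n) H)).
  { intros y Hy. assert (M_P P n y) as Hm.
    { exists (seq n (S n)); split; [exists n; auto|]; split; auto; apply in_seq; lia. }
    apply Hsub, Hiff in Hm. destruct Hm as [h [Hh ->]]. apply (in_map (fun g => g n) H h); auto. }
  apply NoDup_incl_length in Hi; [|apply seq_NoDup].
  rewrite length_seq, length_map in Hi. unfold n in Hi; lia.
Qed.

Lemma invol_seq (a b : nat -> nat) : (forall n m, a n = a m -> n = m) ->
  (forall n m, b n = b m -> n = m) -> (forall n m, a n <> b m) ->
  exists s, is_perm s /\ forall n, s (a n) = b n.
Proof.
  intros Ha Hb Hab.
  pose (t := fun x => match excluded_middle_informative (exists n, b n = x) with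
     | left e => a (proj1_sig (constructive_indefinite_description _ e))
     | right _ => x end).
  assert (Ht : forall n, t (b n) = a n).
  { intro n; unfold t. destruct (excluded_middle_informative _) as [e|e].
    - destruct (constructive_indefinite_description _ e) as [m Hm]; simpl. f_equal; auto.
    - exfalso; eauto. }
  destruct (invol_exists (fun x => exists n, b n = x) t) as [s [Hs Hst]].
  - intros x y [n <-] [m <-]. rewrite !Ht. intro E; apply Ha in E; subst; auto.
  - intros x [n <-] [m Hm]. rewrite Ht in Hm. exact (Hab n m (eq_sym Hm)).
  - exists s; split; auto. intro n. rewrite <- Ht. apply Hst; eauto.
Qed.

Lemma delta_calE_M A B : delta calE A B -> delta M_omega A B.
Proof.
  intros [E [HE [H1 H2]]]. destruct (calE_sub_M E HE) as [P [Ha HP]].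
  exists (M_P P); split; [apply M_omega_of; auto|]. split.
  - intros x Hx; destruct (H1 x Hx) as [u [Hu Eu]]; exists u; auto.
  - intros x Hx; destruct (H2 x Hx) as [u [Hu Eu]]; exists u; auto.
Qed.

Lemma delta_M_calE A B : delta M_omega A B -> delta calE A B.
Proof.
  intros [E [[E' [[P [Ha Hiff]] Hsub]] [H1 H2]]].
  assert (HM : forall x y, E x y -> M_P P x y) by (intros; apply Hiff, Hsub; auto).
  destruct (classic (finite_set A)) as [[lA HA]|nA].
  - assert (HB : finite_set B).
    { apply (finite_sub _ (fun y => exists u, In u lA /\ M_P P u y)).
      - intros y Hy. destruct (H2 y Hy) as [u [Hu Eu]]. exists u; auto.
      - apply finite_union; auto. }
    destruct HB as [lB HB].
    set (H := (fun x => x) :: flat_map (fun a => map (swap a) lB) lA).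
    exists (E_H H); split.
    + apply calE_of_list; [|left; auto].
      intros h [<-|Hh]; [apply id_perm|]. apply in_flat_map in Hh.
      destruct Hh as [a [_ Hh]]. apply in_map_iff in Hh. destruct Hh as [b [<- _]]; apply swap_perm.
    + split.
      * intros a Ha'. destruct (H1 a Ha') as [b [Hb _]]. exists b; split; auto.
        exists (swap a b); split; [|rewrite swap_r; auto].
        right; apply in_flat_map; exists a; split; auto; apply in_map; auto.
      * intros b Hb. destruct (H2 b Hb) as [a [Ha' _]]. exists a; split; auto.
        exists (swap a b); split; [|rewrite swap_l; auto].
        right; apply in_flat_map; exists a; split; auto; apply in_map; auto.
  - assert (nB : ~ finite_set B).
    { intros [lB HB]. apply nA.
      apply (finite_sub _ (fun y => exists u, In u lB /\ M_P P u y)).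
      - intros y Hy. destruct (H1 y Hy) as [u [Hu Eu]]. exists u; auto.
      - apply finite_union; auto. }
    destruct (inf_seq A (inf_of_not_finite A nA)) as [eA [HeA IeA]].
    destruct (inf_seq B (inf_of_not_finite B nB)) as [eB [HeB IeB]].
    destruct (invol_exists (fun x => B x /\ ~ A x) eA) as [s1 [Hs1 Hs1e]].
    { intros; auto. } { intros x _ [_ C]; auto. }
    destruct (invol_exists (fun x => A x /\ ~ B x) eB) as [s2 [Hs2 Hs2e]].
    { intros; auto. } { intros x _ [_ C]; auto. }
    exists (E_H [fun x => x; s1; s2]); split.
    + apply calE_of_list; [|left; auto].
      intros h [<-|[<-|[<-|[]]]]; auto using id_perm.
    + split.
      * intros a Ha'. destruct (classic (B a)) as [Hb|Hb].
        -- exists a; split; auto. exists (fun x => x); split; [left|]; auto.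
        -- exists (eB a); split; auto. exists s2; split; [right; right; left; auto|].
           rewrite Hs2e; auto.
      * intros b Hb. destruct (classic (A b)) as [Ha'|Ha'].
        -- exists b; split; auto. exists (fun x => x); split; [left|]; auto.
        -- exists (eA b); split; auto. exists s1; split; [right; left; auto|].
           rewrite Hs1e; auto.
Qed.

Lemma diam_sub f (A B : nat -> Prop) eps : (forall x, A x -> B x) -> diam_lt f B eps -> diam_lt f A eps.
Proof. intros H [d [Hd Hb]]; exists d; split; auto. Qed.

Lemma so_M_calE f : so M_omega f -> so calE f.
Proof.
  intros [Hb Hs]; split; auto.
  intros E eps HE Heps. destruct (calE_sub_M E HE) as [P [Ha HP]].
  destruct (Hs (M_P P) eps (M_omega_of P Ha) Heps) as [B [HB HBx]].
  exists B; split.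
  - apply finite_calE_bounded, M_bounded_finite; auto.
  - intros x Hx. apply (diam_sub _ _ _ _ (HP x)), HBx; auto.
Qed.

Lemma so_calE_M f : so calE f -> so M_omega f.
Proof.
  intros [Hb Hs]; split; auto.
  intros E eps [E' [[P [Ha Hiff]] Hsub]] Heps.
  assert (HM : forall x y, E x y -> M_P P x y) by (intros; apply Hiff, Hsub; auto).
  set (c := (eps / 3)%R).
  assert (Hc : (0 < c)%R) by (unfold c; lra).
  assert (Claim : exists l : list nat, forall x, ~ In x l -> forall w, M_P P x w ->
                    (Rabs (f x - f w) <= c)%R).
  { apply NNPP; intro Hno.
    assert (Step : forall L : list nat, exists p : nat * nat,
        (forall u, In u L -> ~ M_P P u (fst p)) /\ M_P P (fst p) (snd p) /\
        (c < Rabs (f (fst p) - f (snd p)))%R).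
    { intro L. destruct (finite_union P Ha L) as [lL HL].
      apply NNPP; intro Hn; apply Hno; exists lL. intros x Hx w Hw.
      apply Rnot_lt_le; intro Hlt; apply Hn; exists (x, w); simpl; split; [|auto].
      intros u Hu Hux; apply Hx, HL; eauto. }
    pose (g := fun L => proj1_sig (constructive_indefinite_description _ (Step L))).
    assert (Hg : forall L, (forall u, In u L -> ~ M_P P u (fst (g L))) /\ M_P P (fst (g L)) (snd (g L)) /\
        (c < Rabs (f (fst (g L)) - f (snd (g L))))%R).
    { intro L; unfold g; destruct (constructive_indefinite_description _ (Step L)); auto. }
    pose (Ls := fun n => nat_rect (fun _ => list nat) [] (fun _ L => fst (g L) :: snd (g L) :: L) n).
    pose (a := fun n => fst (g (Ls n))). pose (b := fun n => snd (g (Ls n))).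
    assert (HL : forall n k, k < n -> In (a k) (Ls n) /\ In (b k) (Ls n)).
    { induction n; intros k Hk; [lia|].
      destruct (Nat.eq_dec k n) as [->|Hne].
      - simpl; unfold a, b; simpl; auto.
      - destruct (IHn k ltac:(lia)); simpl; auto. }
    assert (Hnot : forall n u, In u (Ls n) -> a n <> u /\ b n <> u).
    { intros n u Hu. destruct (Hg (Ls n)) as [H1 [H2 _]]. split.
      - intro E1. apply (H1 u Hu). fold (a n). rewrite E1. apply M_P_refl; auto.
      - intro E1. apply (H1 u Hu). fold (a n). rewrite <- E1. apply M_P_sym; auto. }
    assert (Hab0 : forall n, a n <> b n).
    { intros n E1. destruct (Hg (Ls n)) as [_ [_ H3]]. fold (a n) (b n) in H3.
      rewrite E1, Rminus_diag, Rabs_R0 in H3. lra. }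
    assert (Hlt : forall n k, k < n -> a n <> a k /\ a n <> b k /\ b n <> a k /\ b n <> b k).
    { intros n k Hk. destruct (HL n k Hk) as [Ha1 Hb1].
      destruct (Hnot n _ Ha1); destruct (Hnot n _ Hb1); tauto. }
    assert (Ia : forall n m, a n = a m -> n = m).
    { intros n m E1. destruct (Compare_dec.lt_eq_lt_dec n m) as [[h|h]|h]; auto;
      [destruct (Hlt m n h) | destruct (Hlt n m h)]; intuition. }
    assert (Ib : forall n m, b n = b m -> n = m).
    { intros n m E1. destruct (Compare_dec.lt_eq_lt_dec n m) as [[h|h]|h]; auto;
      [destruct (Hlt m n h) | destruct (Hlt n m h)]; intuition. }
    assert (Iab : forall n m, a n <> b m).
    { intros n m E1. destruct (Compare_dec.lt_eq_lt_dec n m) as [[h|h]|h];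
      [destruct (Hlt m n h) | subst; apply (Hab0 m); auto | destruct (Hlt n m h)]; intuition. }
    destruct (invol_seq a b Ia Ib Iab) as [s [Hsp Hse]].
    assert (HcE : calE (E_H [fun x => x; s])).
    { apply calE_of_list; [|left; auto]. intros h [<-|[<-|[]]]; auto using id_perm. }
    destruct (Hs _ c HcE Hc) as [B' [HB' HBx]].
    apply calE_bounded_finite in HB'. destruct HB' as [l' Hl'].
    destruct (pigeon a Ia l') as [n Hn].
    destruct (HBx (a n) (fun h => Hn (Hl' _ h))) as [d [Hd Hdd]].
    assert (Hy : ball (E_H [fun x => x; s]) (a n) (a n)) by (exists (fun x => x); split; [left|]; auto).
    assert (Hz : ball (E_H [fun x => x; s]) (a n) (b n)) by (exists s; split; [right; left|]; auto).
    specialize (Hdd _ _ Hy Hz). destruct (Hg (Ls n)) as [_ [_ H3]]. fold (a n) (b n) in H3. lra. }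
  destruct Claim as [l Hl].
  exists (fun x => In x l); split.
  - apply finite_M_bounded; exists l; auto.
  - intros x Hx. exists (2 * c)%R; split; [unfold c; lra|].
    intros y z Hy Hz. apply HM in Hy; apply HM in Hz.
    pose proof (Hl x Hx y Hy). pose proof (Hl x Hx z Hz).
    unfold Rabs in *; repeat destruct Rcase_abs; lra.
Qed.

Theorem mainTheorem11 :
  (forall f : nat -> R, so calE f <-> so M_omega f) /\
  (forall A B : nat -> Prop, delta calE A B <-> delta M_omega A B) /\
  ~ (forall E : rel, calE E <-> M_omega E) /\
  (forall Y : nat -> Prop, bounded_set calE Y <-> finite_set Y) /\
  (forall Y : nat -> Prop, bounded_set M_omega Y <-> finite_set Y).
Proof.
  split; [intro f; split; [apply so_calE_M | apply so_M_calE]|].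
  split; [intros A B; split; [apply delta_calE_M | apply delta_M_calE]|].
  split; [apply not_equal|].
  split; intro Y; split; auto using calE_bounded_finite, finite_calE_bounded,
    M_bounded_finite, finite_M_bounded.
Qed.
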